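(* Let $G$ be a $2$-free digraph on $n$ vertices. Then $\tilde{P}_3(G) \leq \frac{2}{25}n^3$.
   Context: All digraphs are finite, have no loops, and have at most one edge $uv$ (the ordered pair $(u,v)$) for each ordered pair of distinct vertices. A digraph is $2$-free if it has no directed cycle of length at most $2$, i.e. there are no distinct vertices $u,v$ with both $uv$ and $vu$ edges. An induced $3$-vertex directed path is a triple $(a,b,c)$ of distinct vertices such that $ab$ and $bc$ are edges and neither $ac$ nor $ca$ is an edge. $\tilde{P}_3(G)$ denotes the number of induced $3$-vertex directed paths in $G$. *)

(* Defs.v *)
From mathcomp Require Import all_boot.
Set Implicit Arguments. Unset Strict Implicit. Unset Printing Implicit Defensive.

(* A digraph on the finite vertex type T is an edge relation e : rel T,
   where e u v means the edge uv (ordered pair (u,v)) is present. *)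
Definition loopless (T : finType) (e : rel T) : Prop := forall v : T, ~~ e v v.

Definition two_free (T : finType) (e : rel T) : Prop :=
  loopless e /\ forall u v : T, u != v -> ~~ (e u v && e v u).

Definition induced_P3 (T : finType) (e : rel T) (a b c : T) : bool :=
  [&& a != b, b != c, a != c, e a b, e b c, ~~ e a c & ~~ e c a].

Definition P3tilde (T : finType) (e : rel T) : nat :=
  #|[set t : T * T * T | induced_P3 e t.1.1 t.1.2 t.2]|.

(* Main.v *)
Require Import Defs.
From mathcomp Require Import all_boot all_order all_algebra.
From mathcomp Require Import zify ring lra.
Import Order.TTheory GRing.Theory Num.Theory.

Section S.
Local Open Scope ring_scope.
Variables (T : finType) (e : rel T).
Hypothesis H2 : two_free e.

Definition sv v x : int := ((e v x || e x v) : nat)%:Z.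
Definition dv v x : int := (e x v : nat)%:Z - (e v x : nat)%:Z.
Definition tv (v x : T) : int := (x != v : nat)%:Z.
Definition F0 v x y : int := - 5 * sv v x * sv v y - 9 * dv v x * dv v y
   + 4 * sv v x * tv v y + 4 * tv v x * sv v y.
Definition Fd v x y : int := (x != y : nat)%:Z * F0 v x y.
Definition I3 a b c : int := (induced_P3 e a b c : nat)%:Z.

Lemma ll v : e v v = false.
Proof. by case: H2 => /(_ v) /negbTE. Qed.

Lemma Fd_vv v y : Fd v v y = 0.
Proof. by rewrite /Fd /F0 /sv /dv /tv ll eqxx /=; lia. Qed.
Lemma Fd_vxv v x : Fd v x v = 0.
Proof. by rewrite /Fd /F0 /sv /dv /tv ll eqxx /=; lia. Qed.
Lemma Fd_xx v x : Fd v x x = 0.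
Proof. by rewrite /Fd eqxx /= mul0r. Qed.

Lemma point a b c :
  40 * (I3 a b c + I3 a c b + I3 b a c + I3 b c a + I3 c a b + I3 c b a)
  <= Fd a b c + Fd a c b + Fd b a c + Fd b c a + Fd c a b + Fd c b a.
Proof.
have I0 : forall x y, I3 x x y = 0 /\ I3 x y x = 0 /\ I3 y x x = 0.
  by move=> x y; rewrite /I3 /induced_P3 !eqxx /= !andbF.
case: (eqVneq a b) => [<-|hab].
  have [h1 [h2 h3]] := I0 a c.
  by rewrite h1 h2 h3 !Fd_vv !Fd_vxv !Fd_xx.
case: (eqVneq a c) => [<-|hac].
  have [h1 [h2 h3]] := I0 a b.
  by rewrite h1 h2 h3 !Fd_vv !Fd_vxv !Fd_xx.
case: (eqVneq b c) => [<-|hbc].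
  have [h1 [h2 h3]] := I0 b a.
  by rewrite h1 h2 h3 !Fd_vv !Fd_vxv !Fd_xx.
have [_ tf] := H2.
have t1 := tf _ _ hab; have t2 := tf _ _ hac; have t3 := tf _ _ hbc.
move: hab hac hbc; rewrite eq_sym => /negbTE hba; rewrite eq_sym => /negbTE hca;
  rewrite eq_sym => /negbTE hcb.
have hab : (a == b) = false by rewrite eq_sym.
have hac : (a == c) = false by rewrite eq_sym.
have hbc : (b == c) = false by rewrite eq_sym.
rewrite /I3 /induced_P3 /Fd /F0 /sv /dv /tv hab hac hbc hba hca hcb /=.
move: t1 t2 t3.
case: (e a b); case: (e b a); case: (e a c); case: (e c a); case: (e b c); case: (e c b) => //= _ _ _; lia.
Qed.

Lemma F0_xx v x : F0 v x x = - 6 * sv v x.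
Proof.
have [_ tf] := H2.
rewrite /F0 /sv /dv /tv.
case: (eqVneq x v) => [->|hxv]; first by rewrite ll /=; lia.
move: (tf _ _ hxv).
by case: (e v x); case: (e x v) => //= _; lia.
Qed.

Lemma dsum (a b : T -> int) :
  \sum_x \sum_y (a x * b y) = (\sum_x a x) * (\sum_y b y).
Proof. by rewrite big_distrlr. Qed.

Lemma row_sum v x : \sum_y Fd v x y = \sum_y F0 v x y - F0 v x x.
Proof.
rewrite (bigD1 x) //= [in RHS](bigD1 x) //= /Fd eqxx /= mul0r add0r.
rewrite addrC addrK; apply: eq_bigr => y hy; by rewrite eq_sym hy mul1r.
Qed.

Lemma N1 v : \sum_x tv v x = (#|T| - 1)%:Z.
Proof.
have -> : \sum_x tv v x = (\sum_x (x != v : nat))%N%:Z.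
  by rewrite (big_morph Posz PoszD (erefl _)).
rewrite -big_mkcond sum1dep_card.
have := cardsC1 v; rewrite /setC.
have -> : [set x | x != v] = ~: [set v] by apply/setP => x; rewrite !inE.
move=> ->; congr Posz; lia.
Qed.

Lemma quad (s d t : T -> int) : \sum_x \sum_y ((-5 * s x) * s y + (-9 * d x) * d y
  + (4 * s x) * t y + (4 * t x) * s y) =
  -5 * (\sum_x s x)^+2 - 9 * (\sum_x d x)^+2 + 8 * (\sum_x t x) * (\sum_x s x).
Proof.
under eq_bigr do rewrite !big_split.
rewrite !big_split /= !dsum -!mulr_sumr; ring.
Qed.

Lemma vertex v :
  \sum_x \sum_y Fd v x y =
   - 5 * (\sum_x sv v x) ^+ 2 - 9 * (\sum_x dv v x) ^+ 2
   + 8 * (#|T| - 1)%:Z * (\sum_x sv v x) + 6 * (\sum_x sv v x).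
Proof.
under eq_bigr do rewrite row_sum.
rewrite sumrB.
under [X in _ - X = _]eq_bigr do rewrite F0_xx.
rewrite -mulr_sumr.
have -> : \sum_x \sum_y F0 v x y = \sum_x \sum_y ((-5 * sv v x) * sv v y
   + (-9 * dv v x) * dv v y + (4 * sv v x) * tv v y + (4 * tv v x) * sv v y).
  by apply: eq_bigr => x _; apply: eq_bigr => y _; rewrite /F0; ring.
rewrite quad N1; ring.
Qed.

Lemma vertex_bd v : 5 * \sum_x \sum_y Fd v x y <= 16 * (#|T|%:Z) ^+ 2.
Proof.
rewrite vertex.
have S0 : 0 <= \sum_x sv v x by apply: sumr_ge0 => x _; rewrite /sv.
set S := \sum_x sv v x; set D := \sum_x dv v x.
have Tn : (1 <= #|T|)%N by apply/card_gt0P; exists v.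
have -> : ((#|T| - 1)%N)%:Z = #|T|%:Z - 1 by rewrite subzn.
set n := #|T|%:Z.
have hD : 0 <= D ^+ 2 by rewrite sqr_ge0.
have hE : 0 <= (5 * S - 4 * n) ^+ 2 by rewrite sqr_ge0.
rewrite -subr_ge0.
have -> : 16 * n ^+ 2 - 5 * (-5 * S ^+ 2 - 9 * D ^+ 2 + 8 * (n - 1) * S + 6 * S)
  = (5 * S - 4 * n) ^+ 2 + 45 * D ^+ 2 + 10 * S by ring.
by rewrite !addr_ge0 // mulr_ge0.
Qed.

Definition Ft (t : T * T * T) := Fd t.1.1 t.1.2 t.2.
Definition It (t : T * T * T) := I3 t.1.1 t.1.2 t.2.

Lemma perm_sum (h : T * T * T -> T * T * T) (g : T * T * T -> int) :
  injective h -> \sum_t g (h t) = \sum_t g t.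
Proof. by move=> hi; rewrite [RHS](reindex_inj hi). Qed.

Definition h1 (t : T * T * T) := (t.1.1, t.2, t.1.2).
Definition h2 (t : T * T * T) := (t.1.2, t.1.1, t.2).
Definition h3 (t : T * T * T) := (t.1.2, t.2, t.1.1).
Definition h4 (t : T * T * T) := (t.2, t.1.1, t.1.2).
Definition h5 (t : T * T * T) := (t.2, t.1.2, t.1.1).

Lemma six (g : T * T * T -> int) :
  \sum_t (g t + g (h1 t) + g (h2 t) + g (h3 t) + g (h4 t) + g (h5 t))
  = 6 * \sum_t g t.
Proof.
rewrite !big_split /= !perm_sum; first by ring.
all: by move=> [[a b] c] [[a' b'] c']; rewrite /h1 /h2 /h3 /h4 /h5 /= => -[] -> -> ->.
Qed.

Lemma main40 : 40 * \sum_t It t <= \sum_t Ft t.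
Proof.
have : 6 * (40 * \sum_t It t) <= 6 * \sum_t Ft t.
  rewrite mulrCA -!six mulr_sumr; apply: ler_sum => -[[a b] c] _.
  exact: point.
by rewrite ler_pM2l.
Qed.

Lemma sumIt : \sum_t It t = (P3tilde e)%:Z.
Proof.
rewrite /P3tilde -sum1dep_card (big_morph Posz PoszD (erefl _)) [RHS]big_mkcond /=.
by apply: eq_bigr => t _; rewrite /It /I3; case: (induced_P3 _ _ _ _).
Qed.

Lemma sumFt : \sum_t Ft t = \sum_v \sum_x \sum_y Fd v x y.
Proof. by rewrite pair_big /= pair_big /=. Qed.

Lemma final_int : 200 * (P3tilde e)%:Z <= 16 * (#|T|%:Z) ^+ 3.
Proof.
have h := main40; rewrite sumIt sumFt in h.
have h' : 5 * \sum_v \sum_x \sum_y Fd v x y <= \sum_(v : T) 16 * (#|T|%:Z) ^+ 2.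
  rewrite mulr_sumr; apply: ler_sum => v _; exact: vertex_bd.
rewrite sumr_const in h'.
have -> : 16 * (#|T|%:Z) ^+ 3 = 16 * #|T|%:Z ^+ 2 *+ #|T|.
  by rewrite -mulr_natr exprS; ring.
apply: le_trans h'.
have : 5 * (40 * (P3tilde e)%:Z) <= 5 * \sum_v \sum_x \sum_y Fd v x y.
  by rewrite ler_pM2l.
by rewrite mulrA.
Qed.
End S.

Theorem mainTheorem1 (T : finType) (e : rel T) :
  two_free e -> 25 * P3tilde e <= 2 * #|T| ^ 3.
Proof.
move=> H; have := @final_int T e H.
set P := P3tilde e; set n := #|T|.
have -> : (200 * P%:Z = (200 * P)%N%:Z)%R by rewrite PoszM.
have E : ((n ^ 3)%N%:Z = n%:Z ^+ 3)%R by rewrite -[LHS]natz natrX natz.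
have -> : (16 * n%:Z ^+ 3 = (16 * n ^ 3)%N%:Z)%R by rewrite PoszM E.
rewrite lez_nat; lia.
Qed.
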